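(* For every integer $N>1$ there exists a non-disjoint $(2^N,N,2^{N-1},(N-1)2^{N-2})$-SEDF (in $\mathbb{Z}_{2^N}$); in particular, non-disjoint SEDFs exist with any number $N\ge 2$ of sets.
   Context: Groups are written additively. For subsets $A,B$ of a group $G$, $\Delta(A,B)$ denotes the multiset $\{a-b: a\in A, b\in B\}$, and $\lambda G$ denotes the multiset containing each element of $G$ exactly $\lambda$ times. For a group $G$ of order $v$ and $m>1$, a family of $k$-subsets $\{A_1,\dots,A_m\}$ of $G$ (not required to be disjoint) is a non-disjoint $(v,m,k,\lambda)$-SEDF if for each $1\le i\le m$ the multiset union $\bigcup_{j\neq i}\Delta(A_i,A_j)$ equals $\lambda G$. *)

(* Defs.v *)
From HB Require Import structures.
From mathcomp Require Import all_boot all_order all_algebra.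
Set Implicit Arguments. Unset Strict Implicit. Unset Printing Implicit Defensive.
Import GRing.Theory.
Local Open Scope ring_scope.

(* Multiplicity of g in the multiset Delta(A,B) = {a - b : a in A, b in B}. *)
Definition delta_mult (G : finZmodType) (A B : {set G}) (g : G) : nat :=
  #|[set p : G * G | [&& p.1 \in A, p.2 \in B & p.1 - p.2 == g]]|.

(* The sets need not be
   disjoint. *)
Definition nondisjoint_SEDF (G : finZmodType) (v m k lam : nat)
    (A : 'I_m -> {set G}) : Prop :=
  [/\ #|G| = v, (1 < m)%N, (forall i, #|A i| = k) &
      forall (i : 'I_m) (g : G),
        (\sum_(j < m | j != i) delta_mult (A i) (A j) g)%N = lam].
Arguments nondisjoint_SEDF {G} v m k lam A.

(* Main.v *)
Require Import Defs.
From mathcomp Require Import all_boot all_order all_algebra.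
Import GRing.Theory.
From mathcomp Require Import zify.

Definition nbit (k n : nat) : bool := odd (n %/ 2 ^ k).

Lemma nbit_mod (N k n : nat) : (k < N)%N -> nbit k (n %% 2 ^ N) = nbit k n.
Proof.
move=> kN; rewrite /nbit {2}(divn_eq n (2 ^ N)).
have -> : (2 ^ N = 2 ^ (N - k) * 2 ^ k)%N by rewrite -expnD subnK // ltnW.
rewrite mulnA divnMDl ?expn_gt0 // oddD oddM oddX.
by rewrite subn_eq0 leqNgt kN /= andbF.
Qed.

Lemma nbit_flip (k n : nat) : nbit k (n + 2 ^ k) = ~~ nbit k n.
Proof. by rewrite /nbit addnC -{1}(mul1n (2 ^ k)) divnMDl ?expn_gt0 // oddD. Qed.

Lemma nbit_low (l k n : nat) : (l < k)%N -> nbit l (n + 2 ^ k) = nbit l n.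
Proof.
move=> lk; rewrite /nbit.
have -> : (2 ^ k = 2 ^ (k - l) * 2 ^ l)%N by rewrite -expnD subnK // ltnW.
rewrite addnC divnMDl ?expn_gt0 // oddD oddX.
by rewrite subn_eq0 leqNgt lk.
Qed.

Local Open Scope ring_scope.
Section S.
Variable N : nat.
Hypothesis hN : (1 < N)%N.
Local Notation T := 'Z_(2 ^ N).
Lemma hM : (Zp_trunc (2 ^ N)).+2 = (2 ^ N)%N.
Proof. apply: Zp_cast. exact: ltn_trans hN (ltn_expl _ (isT : (1 < 2)%N)). Qed.
Lemma valD (x y : T) : val (x + y) = ((val x + val y) %% 2 ^ N)%N.
Proof. rewrite /=. by rewrite {3}hM. Qed.

Definition bit (k : nat) (x : T) := nbit k (val x).
Definition ee (k : nat) : T := inZp (2 ^ k).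
Lemma val_ee k : (k < N)%N -> val (ee k) = (2 ^ k)%N.
Proof.
move=> kN; rewrite /= hM modn_small // ltn_exp2l //.
Qed.

Lemma bit_flip k (x : T) : (k < N)%N -> bit k (x + ee k) = ~~ bit k x.
Proof. by move=> kN; rewrite /bit valD val_ee // nbit_mod // nbit_flip. Qed.

Lemma bit_low l k (x : T) : (l < k)%N -> (k < N)%N -> bit l (x + ee k) = bit l x.
Proof.
move=> lk kN; rewrite /bit valD val_ee // nbit_mod ?nbit_low //.
exact: ltn_trans kN.
Qed.

Lemma card_half (S0 S1 : {set T}) (c : nat) :
  #|S0| = #|S1| -> (#|S0| + #|S1| = 2 * c)%N -> #|S0| = c.
Proof. move=> -> ; lia. Qed.

Lemma C1 k : (k < N)%N -> #|[set x : T | ~~ bit k x]| = (2 ^ (N - 1))%N.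
Proof.
move=> kN.
apply: (card_half _ [set x : T | bit k x]).
  rewrite -(card_preimset [set x : T | ~~ bit k x] (addIr (ee k))).
  apply: eq_card => x.
  by rewrite !inE bit_flip // negbK.
have -> : [set x : T | bit k x] = ~: [set x : T | ~~ bit k x].
  by apply/setP => x; rewrite !inE negbK.
rewrite cardsC card_ord hM -expnS subn1 prednK //; lia.
Qed.

Lemma C2 l k (h : T) : (l < k)%N -> (k < N)%N ->
  #|[set x : T | ~~ bit k x && ~~ bit l (x + h)]| = (2 ^ (N - 2))%N.
Proof.
move=> lk kN.
have lN : (l < N)%N by exact: ltn_trans kN.
have hQ : #|[set x : T | ~~ bit l (x + h)]| = (2 ^ (N - 1))%N.
  rewrite -(@C1 l lN) -(card_preimset [set x : T | ~~ bit l x] (addIr h)); apply: eq_card => x.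
  by rewrite !inE.
apply: (card_half _ [set x : T | bit k x && ~~ bit l (x + h)]).
  rewrite -(card_preimset [set x : T | ~~ bit k x && ~~ bit l (x + h)] (addIr (ee k))).
  apply: eq_card => x.
  by rewrite !inE bit_flip // addrAC bit_low // negbK.
rewrite -(cardsID [set x : T | ~~ bit k x] [set x : T | ~~ bit l (x + h)]) in hQ.
have E1 : [set x : T | ~~ bit l (x + h)] :&: [set x : T | ~~ bit k x]
   = [set x : T | ~~ bit k x && ~~ bit l (x + h)].
  by apply/setP => x; rewrite !inE andbC.
have E2 : [set x : T | ~~ bit l (x + h)] :\: [set x : T | ~~ bit k x]
   = [set x : T | bit k x && ~~ bit l (x + h)].
  by apply/setP => x; rewrite !inE negbK andbC.
rewrite E1 E2 in hQ; rewrite hQ.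
have -> : (N - 1 = (N - 2).+1)%N by lia.
by rewrite expnS.
Qed.


Definition AA (i : nat) : {set T} := [set x : T | ~~ bit i x].

Lemma delta_AA (i j : nat) (g : T) : (i < N)%N -> (j < N)%N -> i != j ->
  delta_mult (AA i) (AA j) g = (2 ^ (N - 2))%N.
Proof.
move=> iN jN ij.
rewrite /delta_mult.
set P := [set p : T * T | _].
have -> : #|P| = #|[set b : T | ~~ bit j b && ~~ bit i (b + g)]|.
  rewrite -(card_in_imset (f := snd)).
    apply: eq_card => b; rewrite inE; apply/imsetP/idP.
      move=> [[a b'] + ->]; rewrite inE /AA !inE /= => /and3P [Ha Hb /eqP Hg].
      by rewrite Hb -Hg addrC subrK Ha.
    move=> /andP [Hb Ha]; exists (b + g, b) => //.
    by rewrite inE /AA !inE /= Ha Hb addrAC subrr add0r eqxx.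
  move=> [a1 b1] [a2 b2]; rewrite !inE /= => /and3P [_ _ /eqP H1] /and3P [_ _ /eqP H2] Eb.
  subst b2; congr (_, _).
  by rewrite -(subrK b1 a1) H1 -H2 subrK.
case: (ltngtP i j) => [lt|gt|eq]; last by rewrite eq eqxx in ij.
  exact: C2.
rewrite -(card_preimset [set b : T | ~~ bit j b && ~~ bit i (b + g)] (addIr (- g))).
rewrite -(@C2 j i (- g)) //; apply: eq_card => x.
by rewrite !inE andbC subrK.
Qed.

End S.

Theorem corollary3p6 (N : nat) (hN : (1 < N)%N) :
  exists A : 'I_N -> {set 'Z_(2 ^ N)},
    nondisjoint_SEDF (2 ^ N) N (2 ^ N.-1) ((N - 1) * 2 ^ (N - 2)) A.
Proof.
exists (fun i : 'I_N => AA N i); split => //.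
- by rewrite card_ord (@hM N hN).
- by move=> i; rewrite /AA (@C1 N hN i (ltn_ord i)) subn1.
move=> i g.
rewrite (eq_bigr (fun _ => 2 ^ (N - 2))%N); last first.
  move=> j ji; apply: delta_AA => //; by rewrite eq_sym.
by rewrite sum_nat_const cardC1 card_ord subn1.
Qed.
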